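(* Let $m\ge3$ be even and let $(M,g)$ be a unimodular $\Phi_1\Phi_2\Phi_m^\ast$-lattice. Then: (1) if $m=2^k$ is a power of $2$, then $M_m$ is $2$-elementary, and $M^g$ and $M^{-g}$ are both $4$-elementary; (2) if $m=2p^k$ with $p$ an odd prime, then $M_m$ is $p$-elementary, $M^{-g}$ is $2p$-elementary and $M^g$ is $2$-elementary; (3) otherwise, $M_m$ is unimodular, and $M^g$ and $M^{-g}$ are both $2$-elementary.
   Context: $\Phi_i$ denotes the $i$-th cyclotomic polynomial. A lattice with isometry $(M,g)$ is a $\mathbb{Z}$-lattice $M$ (nondegenerate integral symmetric bilinear form) with $g\in O(M)$; it is a $\mu^\ast$-lattice if the minimal polynomial of $g$ is exactly $\mu$. $M_m:=\ker\Phi_m(g)$, $M^g=\ker(g-1)$, $M^{-g}=\ker(g+1)$, each with the restricted form. A lattice $L$ is $n$-elementary if $nD_L=0$ where $D_L=L^\vee/L$, and unimodular if $D_L=0$. *)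

(* Defs.v *)
From HB Require Import structures.
From mathcomp Require Import all_boot all_order all_algebra all_field.
Set Implicit Arguments. Unset Strict Implicit. Unset Printing Implicit Defensive.
Import Order.TTheory GRing.Theory Num.Theory.
Local Open Scope ring_scope.

(* Conventions: a Z-lattice of rank n.+1 is Z^(n.+1) (row vectors 'rV[int])
   with bilinear form b(x,y) = x B y^T for a symmetric Gram matrix B.
   An endomorphism g acts on row vectors by x |-> x *m g.
   A sublattice is given by a predicate L on integer row vectors. *)

Definition ratv n (x : 'rV[int]_n) : 'rV[rat]_n := map_mx intr x.

Definition bform n (B : 'M[int]_n) (x y : 'rV[rat]_n) : rat :=
  (x *m map_mx intr B *m y^T) 0 0.

Definition inL n (L : 'rV[int]_n -> Prop) (y : 'rV[rat]_n) : Prop :=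
  exists x, L x /\ ratv x = y.

Definition inQspan n (L : 'rV[int]_n -> Prop) (y : 'rV[rat]_n) : Prop :=
  exists d : nat, (0 < d)%N /\ inL L (d%:R *: y).

Definition dual n (B : 'M[int]_n) (L : 'rV[int]_n -> Prop) (y : 'rV[rat]_n) : Prop :=
  inQspan L y /\ forall x, L x -> bform B y (ratv x) \is a Num.int.

(* L (with form restricted from B) is k-elementary: k D_L = 0, i.e. k L^vee ⊆ L *)
Definition elementary n (B : 'M[int]_n) (L : 'rV[int]_n -> Prop) (k : nat) : Prop :=
  forall y, dual B L y -> inL L (k%:R *: y).

Definition unimodular n (B : 'M[int]_n) (L : 'rV[int]_n -> Prop) : Prop :=
  elementary B L 1.

Definition fullL n : 'rV[int]_n -> Prop := fun _ => True.

Definition kerL n (g : 'M[int]_n.+1) (p : {poly int}) : 'rV[int]_n.+1 -> Prop :=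
  fun x => x *m horner_mx g p = 0.

Definition is_isometry n (B g : 'M[int]_n) : Prop := g *m B *m g^T = B.

Definition minpolyZ n (g : 'M[int]_n.+1) : {poly rat} := mxminpoly (map_mx intr g).

(* Main.v *)
Require Import Defs.
From HB Require Import structures.
From mathcomp Require Import all_boot all_order all_algebra all_field.
Import Order.TTheory GRing.Theory Num.Theory.
Local Open Scope ring_scope.
From mathcomp Require Import ring.
Local Close Scope ring_scope.
Definition good m q := [&& prime q, (q %| m)%N & ~~ odd (m %/ q)].

Lemma good_odd {m q} : ~~ odd m -> prime q -> odd q -> (q %| m)%N -> good m q.
Proof.
move=> me pq qo qm; rewrite /good pq qm /=.
by move: me; rewrite -{1}(divnK qm) oddM qo andbT.
Qed.

Lemma odd_of_ne2 {q} : prime q -> q != 2 -> odd q.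
Proof. by move=> pq; case: (even_prime pq) => // ->. Qed.

Lemma two_good {m} : (0 < m)%N -> ~~ odd m -> ~ (exists k, m = 2 ^ k)%N ->
  ~ (exists p k : nat, [/\ prime p, odd p & m = 2 * p ^ k]%N) ->
  exists q1 q2, [/\ q1 != q2, good m q1 & good m q2].
Proof.
move=> m0 me n1 n2.
set o := m`_(2^').
have hm : m = (2 ^ logn 2 m * o)%N by rewrite -p_part partnC.
have o1 : (1 < o)%N.
  rewrite ltn_neqAle part_gt0 andbT; apply/eqP => o1; apply: n1.
  by exists (logn 2 m); rewrite {1}hm -o1 muln1.
have o2 : (2^').-nat o := part_pnat _ _.
set q1 := pdiv o.
have q1p : prime q1 := pdiv_prime o1.
have q1o : (q1 %| o)%N := pdiv_dvd o.
have om : (o %| m)%N := dvdn_part _ _.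
have q1m := dvdn_trans q1o om.
have q1n2 : q1 != 2.
  have := pnatPpi o2 (etrans (pi_pdiv o) o1).
  by rewrite !inE.
have q1odd := odd_of_ne2 q1p q1n2.
have g1 : good m q1 := good_odd me q1p q1odd q1m.
have e1 : (0 < logn 2 m)%N by rewrite logn_gt0 mem_primes m0 dvdn2 me.
case: (ltnP 1 (logn 2 m)) => e2.
  exists q1, 2; split => //.
  rewrite /good dvdn2 me /=.
  have [e' he] : exists e', logn 2 m = e'.+2.
    by exists (logn 2 m).-2; move: e2; case: (logn 2 m) => [|[|k]].
  by rewrite hm he expnS -mulnA mulKn // oddM oddX.
have he : logn 2 m = 1%N by apply/eqP; rewrite eqn_leq e1 e2.
set o' := o`_(q1^').
have o0 : (0 < o)%N by apply: ltnW.
have ho : o = (q1 ^ logn q1 o * o')%N by rewrite -p_part partnC.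
have o'1 : (1 < o')%N.
  rewrite ltn_neqAle part_gt0 andbT; apply/eqP => o'1; apply: n2.
  exists q1, (logn q1 o); split => //.
  by rewrite {1}hm he {1}ho -o'1 muln1 expn1.
set q2 := pdiv o'.
have q2p : prime q2 := pdiv_prime o'1.
have q2pi := etrans (pi_pdiv o') o'1.
have q2n1 : q2 != q1.
  by have := pnatPpi (part_pnat _ _) q2pi; rewrite !inE.
have o'o : (o' %| o)%N := dvdn_part _ _.
have q2m : (q2 %| m)%N := dvdn_trans (pdiv_dvd o') (dvdn_trans o'o om).
have q2n2 : q2 != 2.
  by have := pnatPpi (pnat_dvd o'o o2) q2pi; rewrite !inE.
exists q1, q2; split; first by rewrite eq_sym.
  exact: g1.
exact: good_odd me q2p (odd_of_ne2 q2p q2n2) q2m.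
Qed.

Local Open Scope ring_scope.
Lemma Phi1E : 'Phi_1 = 'X - 1.
Proof. by rewrite -(prod_Cyclotomic (isT : (0 < 1)%N)) big_seq1. Qed.

Lemma Phi2E : 'Phi_2 = 'X + 1.
Proof.
have := prod_Cyclotomic (isT : (0 < 2)%N).
have -> : divisors 2 = [:: 1; 2]%N by [].
rewrite big_cons big_seq1 Phi1E.
have -> : ('X^2 - 1 : {poly int}) = ('X - 1) * ('X + 1) by ring.
apply: mulfI; rewrite -size_poly_eq0 size_XsubC //.
Qed.

Definition Sq (t q : nat) : {poly int} := \sum_(i < q) ('X^t) ^+ (q.-1 - i) * 1 ^+ i.

Lemma Sq_dvd {m q : nat} : (0 < m)%N -> prime q -> (q %| m)%N ->
  exists h : {poly int}, Sq (m %/ q) q = h * 'Phi_m.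
Proof.
move=> m0 pq qm.
set t := (m %/ q)%N.
have q1 : (1 < q)%N by apply: prime_gt1.
have t0 : (0 < t)%N by rewrite divn_gt0 ?prime_gt0 // dvdn_leq.
have tm : (t < m)%N by rewrite ltn_Pdiv.
have mtq : m = (t * q)%N by rewrite /t divnK.
have tdm : (t %| m)%N by rewrite mtq dvdn_mulr.
have E1 : ('X^m - 1 : {poly int}) = ('X^t - 1) * Sq t q.
  by rewrite /Sq -subrXX -exprM -mtq expr1n.
have E2 := prod_Cyclotomic m0.
rewrite (bigID (fun d => (d %| t)%N)) /= in E2.
have E3 : \prod_(i <- divisors m | (i %| t)%N) 'Phi_i = 'X^t - 1.
  rewrite -big_filter -(prod_Cyclotomic t0); apply: perm_big.
  apply: uniq_perm; rewrite ?filter_uniq ?divisors_uniq //.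
  move=> d; rewrite mem_filter -!dvdn_divisors //.
  by apply/andP/idP => [[]//|dt]; split=> //; apply: dvdn_trans tdm.
rewrite E3 -big_filter (bigD1_seq m) /= in E2; last first.
- by rewrite filter_uniq ?divisors_uniq.
- rewrite mem_filter -dvdn_divisors // dvdnn andbT.
  by apply/negP => /(dvdn_leq t0); rewrite leqNgt tm.
exists (\prod_(i <- [seq i <- divisors m | ~~ (i %| t)%N] | i != m) 'Phi_i).
have nz : ('X^t - 1 : {poly int}) != 0.
  by rewrite -polyC1 monic_neq0 // monicXnsubC.
apply: (mulfI nz); rewrite -E1 -E2; ring.
Qed.

Lemma Sq1 t q : (Sq t q).[1] = q%:R.
Proof.
rewrite /Sq horner_sum (eq_bigr (fun _ => 1)) ?sumr_const ?card_ord //.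
by move=> i _; rewrite expr1n mulr1 horner_exp hornerXn !expr1n.
Qed.

Lemma SqN1 t q : ~~ odd t -> (Sq t q).[-1] = q%:R.
Proof.
move=> te.
rewrite /Sq horner_sum (eq_bigr (fun _ => 1)) ?sumr_const ?card_ord //.
by move=> i _; rewrite expr1n mulr1 horner_exp hornerXn -signr_odd (negPf te) expr0 expr1n.
Qed.

Definition Iset (p r : {poly int}) (k : nat) :=
  exists a c : {poly int}, (k%:R : int)%:P = a * p + c * r.

Lemma Igcd {p r k1 k2} : Iset p r k1 -> Iset p r k2 -> Iset p r (gcdn k1 k2).
Proof.
move=> [a1 [c1 e1]] [a2 [c2 e2]].
have [u [v huv]] := Bezoutz k1 k2.
exists (u%:P * a1 + v%:P * a2), (u%:P * c1 + v%:P * c2).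
have -> : ((gcdn k1 k2)%:R : int) = u * k1%:R + v * k2%:R by rewrite !natz huv.
rewrite polyCD !polyCM e1 e2; ring.
Qed.

Lemma I0_of {m q h} : 'Phi_m * h = Sq (m %/ q) q -> ~~ odd (m %/ q) ->
  Iset 'Phi_m (('X - 1) * ('X + 1)) q.
Proof.
move=> hS te.
have r1 : root (Sq (m %/ q) q - (q%:R : int)%:P) 1.
  by rewrite /root hornerD hornerN hornerC Sq1 subrr.
have [u hu] := factor_theorem _ _ r1.
have r2 : root u (-1).
  have : (Sq (m %/ q) q - (q%:R : int)%:P).[-1] = 0.
    by rewrite hornerD hornerN hornerC SqN1 ?subrr.
  rewrite hu hornerM hornerD hornerN hornerX hornerC => /eqP.
  by rewrite mulf_eq0 => /orP[] //.
have [v hv] := factor_theorem _ _ r2.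
exists h, (- v).
have e : (q%:R : int)%:P = Sq (m %/ q) q - u * ('X - 1%:P).
  by rewrite -hu; ring.
rewrite e -hS hv polyC1 polyCN opprK; ring.
Qed.

Lemma I1_of {m q h} : 'Phi_m * h = Sq (m %/ q) q ->
  Iset ('X - 1) (('X + 1) * 'Phi_m) (2 * q).
Proof.
move=> hS.
have r1 : root (Sq (m %/ q) q - (q%:R : int)%:P) 1.
  by rewrite /root hornerD hornerN hornerC Sq1 subrr.
have [u hu] := factor_theorem _ _ r1.
exists (- (('X + 1) * u + (q%:R : int)%:P)), h.
have e : Sq (m %/ q) q = (q%:R : int)%:P + u * ('X - 1%:P).
  by rewrite -hu; ring.
have -> : h * (('X + 1) * 'Phi_m) = ('X + 1) * ('Phi_m * h) by ring.
rewrite hS e polyC1 natrM polyCM polyC_natr; ring.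
Qed.

Lemma I2_of {m q h} : 'Phi_m * h = Sq (m %/ q) q -> ~~ odd (m %/ q) ->
  Iset ('X + 1) (('X - 1) * 'Phi_m) (2 * q).
Proof.
move=> hS te.
have r1 : root (Sq (m %/ q) q - (q%:R : int)%:P) (-1).
  by rewrite /root hornerD hornerN hornerC SqN1 ?subrr.
have [u hu] := factor_theorem _ _ r1.
exists (('X - 1) * u + (q%:R : int)%:P), (- h).
have e : Sq (m %/ q) q = (q%:R : int)%:P + u * ('X + 1).
  by move: hu; rewrite polyCN opprK => <-; ring.
have -> : - h * (('X - 1) * 'Phi_m) = - ('X - 1) * ('Phi_m * h) by ring.
rewrite hS e natrM polyCM polyC_natr; ring.
Qed.

Lemma Mq_inj m1 m2 : injective (map_mx (intr : int -> rat) : 'M[int]_(m1, m2) -> 'M[rat]_(m1, m2)).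
Proof.
move=> x y /matrixP e; apply/matrixP=> i j; have := e i j; rewrite !mxE; exact: intr_inj.
Qed.

Section Bform.
Variables (N : nat) (B : 'M[int]_N).

Lemma bformDr y u v : bform B y (u + v) = bform B y u + bform B y v.
Proof. by rewrite /bform linearD /= mulmxDr mxE. Qed.
Lemma bformZr y a u : bform B y (a *: u) = a * bform B y u.
Proof. by rewrite /bform linearZ /= -scalemxAr mxE. Qed.
Lemma bformDl y u v : bform B (u + v) y = bform B u y + bform B v y.
Proof. by rewrite /bform !mulmxDl mxE. Qed.
Lemma bformZl y a u : bform B (a *: u) y = a * bform B u y.
Proof. by rewrite /bform -!scalemxAl mxE. Qed.
Lemma bformNr y u : bform B y (- u) = - bform B y u.
Proof. by rewrite -scaleN1r bformZr mulN1r. Qed.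
Lemma bformNl y u : bform B (- u) y = - bform B u y.
Proof. by rewrite -scaleN1r bformZl mulN1r. Qed.

Lemma bformC u v : B^T = B -> bform B u v = bform B v u.
Proof.
move=> hB; rewrite /bform -[in LHS](trmxK (u *m _ *m _)) [in LHS]mxE.
by rewrite !trmx_mul trmxK map_trmx hB mulmxA.
Qed.

Lemma bformG (g : 'M[int]_N) u v : is_isometry B g ->
  bform B (u *m map_mx intr g) (v *m map_mx intr g) = bform B u v.
Proof.
move=> hg; rewrite /bform trmx_mul.
have -> : u *m map_mx intr g *m map_mx intr B *m ((map_mx intr g)^T *m v^T)
  = u *m (map_mx intr g *m map_mx intr B *m (map_mx intr g)^T) *m v^T.
  by rewrite !mulmxA.
by rewrite map_trmx -!map_mxM hg.
Qed.

Lemma bform_eps (g : 'M[int]_N) (e : rat) u v : is_isometry B g -> e * e = 1 ->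
  v *m (map_mx intr g - e%:M) = 0 -> bform B (u *m (map_mx intr g - e%:M)) v = 0.
Proof.
move=> hg ee hv.
have vG : v *m map_mx intr g = e *: v.
  by apply/eqP; rewrite -subr_eq0 -mul_mx_scalar -mulmxBr hv.
have vv : v = e *: (v *m map_mx intr g) by rewrite vG scalerA ee scale1r.
rewrite mulmxBr mul_mx_scalar bformDl bformNl bformZl.
by rewrite [in X in X - _]vv bformZr bformG // subrr.
Qed.
End Bform.
Section Elem.
Variables (n : nat) (B g : 'M[int]_n.+1).
Local Notation hM p := (map_mx (intr : int -> rat) (horner_mx g p)).

Lemma hmul p q : horner_mx g p *m horner_mx g q = horner_mx g (p * q).
Proof. by rewrite rmorphM. Qed.

Lemma hMmul p q : hM p *m hM q = hM (p * q).
Proof. by rewrite -map_mxM hmul. Qed.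

Lemma hMcomm p q : hM p *m hM q = hM q *m hM p.
Proof. by rewrite !hMmul mulrC. Qed.

Lemma hMC (c : int) : hM c%:P = (intr c : rat)%:M.
Proof. by rewrite horner_mx_C map_scalar_mx. Qed.

Lemma hMXm1 : hM ('X - 1) = map_mx intr g - 1%:M.
Proof. by rewrite rmorphB /= horner_mx_X rmorph1 map_mxB map_mx1. Qed.

Lemma hMXp1 : hM ('X + 1) = map_mx intr g - (-1)%:M.
Proof. by rewrite rmorphD /= horner_mx_X rmorph1 map_mxD map_mx1 raddfN opprK. Qed.

Lemma hMD p q : hM (p + q) = hM p + hM q.
Proof. rewrite rmorphD; exact: map_mxD. Qed.
Lemma hMB p q : hM (p - q) = hM p - hM q.
Proof. rewrite rmorphB; exact: map_mxB. Qed.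

Lemma hMk (k : nat) (w : 'rV[rat]_n.+1) : w *m hM ((k%:R : int)%:P) = (k%:R : rat) *: w.
Proof. by rewrite hMC mul_mx_scalar rmorph_nat. Qed.

Lemma elem_gen p r a c (k : nat) : (0 < k)%N -> horner_mx g (p * r) = 0 ->
  unimodular B (@fullL n.+1) ->
  (k%:R : int)%:P = a * p + c * r ->
  (forall y w : 'rV[rat]_n.+1, y *m hM p = 0 -> w *m hM r = 0 -> bform B y w = 0) ->
  elementary B (kerL g p) k.
Proof.
move=> k0 hpr unim hk orth y [[d [d0 [x0 [Lx0 ex0]]]] hy].
rewrite /kerL in Lx0.
have yp : y *m hM p = 0.
  have : ratv (x0 *m horner_mx g p) = 0 by rewrite Lx0 /ratv map_mx0.
  rewrite /ratv map_mxM -/(ratv x0) ex0 -scalemxAl => /eqP.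
  by rewrite scalemx_eq0 pnatr_eq0 eqn0Ngt d0 /= => /eqP.
have hk' : horner_mx g ((k%:R : int)%:P) =
    horner_mx g a *m horner_mx g p + horner_mx g c *m horner_mx g r.
  by rewrite hk rmorphD /= !hmul.
have kz : forall z : 'rV[int]_n.+1, (k%:R : rat) *: ratv z =
    ratv (z *m horner_mx g a *m horner_mx g p) + ratv (z *m horner_mx g c *m horner_mx g r).
  move=> z; rewrite /ratv -map_mxD -!mulmxA -mulmxDr -hk' map_mxM.
  by rewrite -/(ratv z) hMk.
have int_k : forall z : 'rV[int]_n.+1, bform B ((k%:R : rat) *: y) (ratv z) \is a Num.int.
  move=> z; rewrite bformZl -bformZr kz bformDr.
  have -> : bform B y (ratv (z *m horner_mx g a *m horner_mx g p)) = 0.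
    apply: orth => //.
    by rewrite /ratv -map_mxM -!mulmxA hmul hpr !mulmx0 map_mx0.
  rewrite add0r; apply: hy.
  by rewrite /kerL -!mulmxA !hmul [r * p]mulrC -hmul hpr !mulmx0.
have := unim ((k%:R : rat) *: y).
case.
  split=> //; exists d; split=> //.
  exists ((k%:R : int) *: x0); split=> //.
  by rewrite /ratv map_mxZ /= -/(ratv x0) ex0 rmorph_nat !scalerA mulrC.
move=> x1 [_ ex1].
exists x1; split; last by rewrite ex1 scale1r.
rewrite /kerL; apply: Mq_inj.
by rewrite map_mxM -/(ratv x1) ex1 scale1r -scalemxAl yp scaler0 map_mx0.
Qed.

Lemma orth_eps p r a c (k : nat) (e : rat) : is_isometry B g -> B^T = B -> e * e = 1 ->
  hM p = map_mx intr g - e%:M -> (0 < k)%N -> (k%:R : int)%:P = a * p + c * r ->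
  forall y w : 'rV[rat]_n.+1, y *m hM p = 0 -> w *m hM r = 0 -> bform B y w = 0.
Proof.
move=> hg hB ee hp k0 hk y w yp wr.
have kw : (k%:R : rat) *: w = (w *m hM a) *m (map_mx intr g - e%:M).
  rewrite -hMk hk hMD mulmxDr -!hMmul.
  by rewrite [hM c *m _]hMcomm [w *m (hM r *m _)]mulmxA wr mul0mx addr0 mulmxA hp.
have : (k%:R : rat) * bform B y w = 0.
  by rewrite -bformZr kw bformC // bform_eps // -hp.
by move/eqP; rewrite mulf_eq0 pnatr_eq0 eqn0Ngt k0 /= => /eqP.
Qed.

Lemma orth_Phi p a c (k : nat) : is_isometry B g -> B^T = B -> (0 < k)%N ->
  (k%:R : int)%:P = a * p + c * (('X - 1) * ('X + 1)) ->
  forall y w : 'rV[rat]_n.+1, y *m hM p = 0 -> w *m hM (('X - 1) * ('X + 1)) = 0 ->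
  bform B y w = 0.
Proof.
move=> hg hB k0 hk y w yp wr.
have ky : (k%:R : rat) *: y = (y *m hM c *m hM ('X + 1)) *m (map_mx intr g - 1%:M) /\
          (k%:R : rat) *: y = (y *m hM c *m hM ('X - 1)) *m (map_mx intr g - (-1)%:M).
  rewrite -hMXm1 -hMXp1 -hMk hk [hM (a * p + _)]hMD [y *m (_ + _)]mulmxDr.
  rewrite -[hM (a * p)]hMmul hMcomm mulmxA yp mul0mx add0r.
  by split; rewrite -!mulmxA !hMmul; congr (_ *m hM _); ring.
have w2 : (2%:R : rat) *: w = w *m hM ('X + 1) - w *m hM ('X - 1).
  rewrite -mulmxBr -hMB.
  have -> : ('X + 1) - ('X - 1) = (((2%N)%:R : int)%:P) by rewrite polyC_natr; ring.
  by rewrite hMk.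
have v1 : (w *m hM ('X + 1)) *m (map_mx intr g - 1%:M) = 0.
  by rewrite -hMXm1 -mulmxA hMmul [(_ + 1) * _]mulrC wr.
have v2 : (w *m hM ('X - 1)) *m (map_mx intr g - (-1)%:M) = 0.
  by rewrite -hMXp1 -mulmxA hMmul wr.
have : (k%:R : rat) * (2%:R * bform B y w) = 0.
  rewrite -bformZr w2 -bformZl bformDr bformNr.
  case: ky => ky1 ky2; rewrite {1}ky1 ky2 !bform_eps ?subrr // ?mulr1 ?mulrNN ?mulr1 //.
by move/eqP; rewrite !mulf_eq0 !pnatr_eq0 eqn0Ngt k0 /= => /eqP.
Qed.
End Elem.

Theorem proposition2p6 (m n : nat) (B g : 'M[int]_n.+1) :
  (3 <= m)%N -> ~~ odd m ->
  B^T = B -> \det B != 0 ->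
  is_isometry B g ->
  minpolyZ g = map_poly intr ('Phi_1 * 'Phi_2 * 'Phi_m) ->
  unimodular B (@fullL n.+1) ->
  [/\ (exists k : nat, m = 2 ^ k)%N ->
        [/\ elementary B (kerL g 'Phi_m) 2,
            elementary B (kerL g ('X - 1)) 4 &
            elementary B (kerL g ('X + 1)) 4],
      (forall p k : nat, prime p -> odd p -> m = (2 * p ^ k)%N ->
          [/\ elementary B (kerL g 'Phi_m) p,
              elementary B (kerL g ('X + 1)) (2 * p) &
              elementary B (kerL g ('X - 1)) 2])
    & ~ (exists k : nat, m = 2 ^ k)%N ->
      ~ (exists p k : nat, [/\ prime p, odd p & m = 2 * p ^ k]%N) ->
        [/\ unimodular B (kerL g 'Phi_m),
            elementary B (kerL g ('X - 1)) 2 &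
            elementary B (kerL g ('X + 1)) 2]].
Proof.
move=> m3 me hB dB hg hmin unim.
have m0 : (0 < m)%N by apply: leq_trans m3.
have hP : horner_mx g (('X - 1) * ('X + 1) * 'Phi_m) = 0.
  apply: Mq_inj; rewrite map_mx0.
  have := mx_root_minpoly (map_mx (intr : int -> rat) g).
  rewrite -/(minpolyZ g) hmin Phi1E Phi2E => h.
  rewrite map_horner_mx; exact: h.
have PE : forall k, (0 < k)%N -> Iset 'Phi_m (('X - 1) * ('X + 1)) k ->
    elementary B (kerL g 'Phi_m) k.
  move=> k k0 [a [c hk]]; apply: (@elem_gen n B g _ _ a c k k0 _ unim hk).
    by rewrite mulrC.
  exact: (@orth_Phi n B g _ a c k hg hB k0 hk).
have X1 : forall k, (0 < k)%N -> Iset ('X - 1) (('X + 1) * 'Phi_m) k ->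
    elementary B (kerL g ('X - 1)) k.
  move=> k k0 [a [c hk]]; apply: (@elem_gen n B g _ _ a c k k0 _ unim hk).
    by rewrite mulrA.
  apply: (@orth_eps n B g _ _ a c k 1 hg hB _ _ k0 hk); first by rewrite mulr1.
  exact: hMXm1.
have X2 : forall k, (0 < k)%N -> Iset ('X + 1) (('X - 1) * 'Phi_m) k ->
    elementary B (kerL g ('X + 1)) k.
  move=> k k0 [a [c hk]]; apply: (@elem_gen n B g _ _ a c k k0 _ unim hk).
    by rewrite mulrA [('X + 1) * _]mulrC.
  apply: (@orth_eps n B g _ _ a c k (-1) hg hB _ _ k0 hk); first by rewrite mulrNN mulr1.
  exact: hMXp1.
have dv : forall q, prime q -> (q %| m)%N -> exists h, 'Phi_m * h = Sq (m %/ q) q.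
  by move=> q pq qm; have [h hh] := Sq_dvd m0 pq qm; exists h; rewrite hh mulrC.
split.
- move=> [k hk].
  have [k' hk'] : exists k', k = k'.+2.
    by case: k hk => [|[|k']] hk; [rewrite hk in m3 | rewrite hk in m3 | exists k'].
  have m2 : (2 %| m)%N by rewrite dvdn2.
  have ev : ~~ odd (m %/ 2) by rewrite hk hk' expnS mulKn // oddX.
  have [h hh] := dv 2%N isT m2.
  split.
  + by apply: PE => //; exact: I0_of hh ev.
  + by apply: X1 => //; exact: I1_of hh.
  + by apply: X2 => //; exact: I2_of hh ev.
- move=> p k pp po hm.
  have [k' hk'] : exists k', k = k'.+1.
    by case: k hm => [|k'] hm; [rewrite hm in m3 | exists k'].
  have p0 := prime_gt0 pp.
  have pm : (p %| m)%N by rewrite hm hk' expnS mulnCA dvdn_mulr.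
  have ev : ~~ odd (m %/ p) by rewrite hm hk' expnS mulnCA mulKn // oddM.
  have [h hh] := dv p pp pm.
  have m2 : (2 %| m)%N by rewrite dvdn2.
  have [h2 hh2] := dv 2%N isT m2.
  have cop : gcdn 2 p = 1%N.
    have : coprime 2 p by rewrite (prime_coprime _ (isT : prime 2)) dvdn2 po.
    by move/eqP.
  split.
  + by apply: PE => //; exact: I0_of hh ev.
  + by apply: X2; [rewrite muln_gt0 p0 | exact: I2_of hh ev].
  + apply: X1 => //.
    by have := Igcd (I1_of hh2) (I1_of hh); rewrite -muln_gcdr cop.
- move=> n1 n2.
  have [q1 [q2 [ne g1 g2]]] := two_good m0 me n1 n2.
  move/and3P: g1 => [p1 d1 e1]; move/and3P: g2 => [p2 d2 e2].
  have [h1 hh1] := dv q1 p1 d1.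
  have [h2 hh2] := dv q2 p2 d2.
  have cop : gcdn q1 q2 = 1%N.
    have : coprime q1 q2 by rewrite (prime_coprime _ p1) dvdn_prime2.
    by move/eqP.
  split.
  + apply: PE => //.
    by have := Igcd (I0_of hh1 e1) (I0_of hh2 e2); rewrite cop.
  + apply: X1 => //.
    by have := Igcd (I1_of hh1) (I1_of hh2); rewrite -muln_gcdr cop.
  + apply: X2 => //.
    by have := Igcd (I2_of hh1 e1) (I2_of hh2 e2); rewrite -muln_gcdr cop.
Qed.
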